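(* Let $\mathcal H$ be a complex Hilbert space, let $\mathbf A=(A_1,\dots,A_m)$ be an $m$-tuple of bounded self-adjoint operators on $\mathcal H$, and let $k$ be a positive integer. If $\Lambda_{\hat k}(\mathbf A)\neq\emptyset$ for some integer $\hat k\ge (m+2)k$, then $\Lambda_k(\mathbf A)$ is star-shaped and contains the convex set $\operatorname{conv}\Lambda_{\hat k}(\mathbf A)$, and every element of $\operatorname{conv}\Lambda_{\hat k}(\mathbf A)$ is a star center of $\Lambda_k(\mathbf A)$.
   Context: For an $m$-tuple $\mathbf A=(A_1,\dots,A_m)$ of bounded self-adjoint operators on a complex Hilbert space $\mathcal H$ and a positive integer $k$, the joint rank-$k$ numerical range is $\Lambda_k(\mathbf A)=\{(a_1,\dots,a_m)\in\mathbb R^m:$ there is an orthogonal projection $P$ of rank $k$ on $\mathcal H$ with $PA_jP=a_jP$ for $j=1,\dots,m\}$. A set $S\subseteq\mathbb R^m$ is star-shaped with star center $\mathbf c\in S$ if for every $\mathbf b\in S$ the line segment joining $\mathbf c$ and $\mathbf b$ lies in $S$. $\operatorname{conv}$ denotes convex hull. *)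

(* Defs.v *)
From HB Require Import structures.
From mathcomp Require Import all_boot all_order all_algebra.
From mathcomp Require Import complex.
From mathcomp Require Import reals.
Set Implicit Arguments. Unset Strict Implicit. Unset Printing Implicit Defensive.
Import Order.TTheory GRing.Theory Num.Theory.
Local Open Scope ring_scope.

Section HilbertDefs.
Variable R : realType.
Variable H : lmodType R[i].
Variable ip : H -> H -> R[i].

Definition is_inner_product : Prop :=
  [/\ (forall (a : R[i]) (x y z : H), ip (a *: x + y) z = a * ip x z + ip y z),
      (forall x y : H, ip x y = conjc (ip y x)),
      (forall x : H, 0 <= ip x x) &
      (forall x : H, ip x x = 0 -> x = 0)].

Definition hnorm (x : H) : R := Num.sqrt (complex.Re (ip x x)).

Definition norm_complete : Prop :=
  forall u : nat -> H,
    (forall e : R, 0 < e -> exists N : nat, forall p q : nat,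
        (N <= p)%N -> (N <= q)%N -> hnorm (u p - u q) < e) ->
    exists x : H, forall e : R, 0 < e -> exists N : nat, forall n : nat,
        (N <= n)%N -> hnorm (u n - x) < e.

Definition is_hilbert : Prop := is_inner_product /\ norm_complete.

Definition linear_op (T : H -> H) : Prop :=
  forall (a : R[i]) (x y : H), T (a *: x + y) = a *: T x + T y.

Definition bounded_op (T : H -> H) : Prop :=
  linear_op T /\ exists M : R, forall x : H, hnorm (T x) <= M * hnorm x.

Definition self_adjoint (T : H -> H) : Prop :=
  forall x y : H, ip (T x) y = ip x (T y).

Definition orth_proj (P : H -> H) : Prop :=
  [/\ linear_op P, (forall x, P (P x) = P x) & self_adjoint P].

Definition has_rank (P : H -> H) (k : nat) : Prop :=
  exists v : 'I_k -> H,
    [/\ (forall i, exists y, P y = v i),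
        (forall c : 'I_k -> R[i], \sum_(i < k) c i *: v i = 0 -> forall i, c i = 0) &
        (forall x, exists c : 'I_k -> R[i], P x = \sum_(i < k) c i *: v i)].

Definition joint_rank_nr (m : nat) (A : 'I_m -> H -> H) (k : nat)
    (a : 'rV[R]_m) : Prop :=
  exists P : H -> H, [/\ orth_proj P, has_rank P k &
    forall (j : 'I_m) (x : H), P (A j (P x)) = ((a ord0 j)%:C)%C *: P x].

End HilbertDefs.

Section Geometry.
Variable R : realType.
Variable m : nat.

Definition conv_hull (S : 'rV[R]_m -> Prop) (a : 'rV[R]_m) : Prop :=
  exists (n : nat) (w : 'I_n -> R) (x : 'I_n -> 'rV[R]_m),
    [/\ (forall i, 0 <= w i), \sum_(i < n) w i = 1, (forall i, S (x i)) &
        a = \sum_(i < n) w i *: x i].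

Definition star_center (S : 'rV[R]_m -> Prop) (c : 'rV[R]_m) : Prop :=
  S c /\ forall b, S b -> forall t : R, 0 <= t <= 1 -> S ((1 - t) *: c + t *: b).

Definition star_shaped (S : 'rV[R]_m -> Prop) : Prop :=
  exists c, star_center S c.
End Geometry.

(* Main.v *)
Require Import Defs.
From HB Require Import structures.
From mathcomp Require Import all_boot all_order all_algebra.
From mathcomp Require Import complex.
From mathcomp Require Import reals.
From mathcomp Require Import ring zify.
Set Implicit Arguments. Unset Strict Implicit.
Import Order.TTheory GRing.Theory Num.Theory.
Local Open Scope ring_scope.

Section Basics.
Variable R : realType.
Variable H : lmodType R[i].
Variable ip : H -> H -> R[i].
Hypothesis hip : is_inner_product ip.

Lemma ipZDl a x y z : ip (a *: x + y) z = a * ip x z + ip y z.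
Proof. by case: hip. Qed.
Lemma ipJ x y : ip x y = conjc (ip y x).
Proof. by case: hip. Qed.
Lemma ip_ge0 x : 0 <= ip x x.
Proof. by case: hip. Qed.
Lemma ip_eq0 x : ip x x = 0 -> x = 0.
Proof. by move=> h; case: hip => _ _ _; apply. Qed.

Lemma ip0l z : ip 0 z = 0.
Proof.
have := ipZDl (-1) z z z. by rewrite scaleN1r addNr mulN1r addNr.
Qed.
Lemma ipDl x y z : ip (x + y) z = ip x z + ip y z.
Proof. by have := ipZDl 1 x y z; rewrite scale1r mul1r. Qed.
Lemma ipZl a x z : ip (a *: x) z = a * ip x z.
Proof. by have := ipZDl a x 0 z; rewrite addr0 ip0l addr0. Qed.
Lemma ipNl x z : ip (- x) z = - ip x z.
Proof. by rewrite -scaleN1r ipZl mulN1r. Qed.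
Lemma ip_suml n (f : 'I_n -> H) z : ip (\sum_(i < n) f i) z = \sum_(i < n) ip (f i) z.
Proof. exact: (big_morph (fun x => ip x z) (fun x y => ipDl x y z) (ip0l z)). Qed.
Lemma ip0r z : ip z 0 = 0.
Proof. by rewrite ipJ ip0l conjc0. Qed.
Lemma ipDr x y z : ip z (x + y) = ip z x + ip z y.
Proof. by rewrite (ipJ z) (ipJ z x) (ipJ z y) ipDl rmorphD. Qed.
Lemma ipZr a x z : ip z (a *: x) = conjc a * ip z x.
Proof. by rewrite (ipJ z) (ipJ z x) ipZl rmorphM. Qed.
Lemma ip_sumr n (f : 'I_n -> H) z : ip z (\sum_(i < n) f i) = \sum_(i < n) ip z (f i).
Proof. exact: (big_morph (fun x => ip z x) (fun x y => ipDr x y z) (ip0r z)). Qed.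
Lemma ip_real x : ((complex.Re (ip x x))%:C)%C = ip x x :> R[i].
Proof. by apply: RRe_real; apply: ger0_real; apply: ip_ge0. Qed.

End Basics.


Section Pick.
Variable R : realType.
Variable H : lmodType R[i].
Variable ip : H -> H -> R[i].
Hypothesis hip : is_inner_product ip.

Lemma pick_vec (p : nat) (v : 'I_p -> H)
  (hind : forall c : 'I_p -> R[i], \sum_(i < p) c i *: v i = 0 -> forall i, c i = 0)
  (U : finType) (u : U -> H) (hU : (#|U| < p)%N) :
  exists f, [/\ exists c : 'I_p -> R[i], f = \sum_(i < p) c i *: v i,
     ip f f = 1 & forall r, ip f (u r) = 0].
Proof.
pose M := \matrix_(i < p, r < #|U|) ip (v i) (u (enum_val r)).
have hK : kermx M != 0.
  rewrite kermx_eq0 /row_free; apply/negP => /eqP hr.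
  by move: (rank_leq_col M); rewrite hr leqNgt hU.
have /existsP [i0 hi0] : [exists i0, row i0 (kermx M) != 0].
  apply: contraR hK => /existsPn hall; apply/eqP/row_matrixP => i.
  by rewrite row0; apply/eqP; move: (hall i); rewrite negbK.
pose c i := kermx M i0 i.
pose f0 := \sum_(i < p) c i *: v i.
have hf0u r : ip f0 (u r) = 0.
  rewrite /f0 (ip_suml hip).
  rewrite (_ : \sum_(i<p) ip (c i *: v i) (u r) = (kermx M *m M) i0 (enum_rank r)).
    by rewrite mulmx_ker mxE.
  rewrite mxE; apply: eq_bigr => i _.
  by rewrite (ipZl hip) [X in _ = _ * X]mxE enum_rankK.
have hf0 : f0 != 0.
  apply/negP => /eqP h0; move/negP: hi0; apply; apply/eqP/rowP => j.
  by rewrite [LHS]mxE [RHS]mxE; apply: (hind c h0).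
pose n := complex.Re (ip f0 f0).
have hn : 0 < n.
  rewrite lt_def; apply/andP; split.
    apply/negP => /eqP hn0; move/negP: hf0; apply; apply/eqP. apply: (ip_eq0 hip).
    by rewrite -(ip_real hip) -/n hn0.
  by rewrite -ler0c (ip_real hip) ip_ge0.
pose s : R[i] := ((Num.sqrt n)^-1)%:C%C.
exists (s *: f0); split.
- by exists (fun i => s * c i); rewrite /f0 scaler_sumr; apply: eq_bigr => i _; rewrite scalerA.
- rewrite (ipZl hip) (ipZr hip) -(ip_real hip) -/n /s conjc_real -!rmorphM /=.
  rewrite mulrA -expr2 exprVn sqr_sqrtr ?ltW // mulVf //; exact: lt0r_neq0.
- by move=> r; rewrite (ipZl hip) hf0u mulr0.
Qed.
End Pick.

Section Family.
Variable R : realType.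
Variable H : lmodType R[i].
Variable ip : H -> H -> R[i].
Hypothesis hip : is_inner_product ip.

Lemma family_vec (p : nat) (v : 'I_p -> H)
  (hind : forall c : 'I_p -> R[i], \sum_(i < p) c i *: v i = 0 -> forall i, c i = 0)
  (U : finType) (u : U -> H) (n : nat) (hn : (#|U| + n <= p)%N) :
  exists g : 'I_n -> H, [/\ forall i, exists c : 'I_p -> R[i], g i = \sum_(l < p) c l *: v l,
     forall i l, ip (g i) (g l) = (i == l)%:R & forall i r, ip (g i) (u r) = 0].
Proof.
elim: n hn => [|n IH] hn.
  by exists (fun i => 0); split => -[].
have hn' : (#|U| + n <= p)%N by apply: leq_trans hn; rewrite leq_add2l.
have [g [hgc hgo hgu]] := IH hn'.
pose u' (s : U + 'I_n) := match s with inl r => u r | inr i => g i end.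
have hU : (#|{: U + 'I_n}| < p)%N by rewrite card_sum card_ord; apply: leq_trans hn; rewrite addnS.
have [f [hfc hff hfu]] := pick_vec hip hind u' hU.
pose g' (i : 'I_n.+1) := oapp g f (unlift ord_max i).
have Eg j : g' (lift ord_max j) = g j by rewrite /g' liftK.
have Ef : g' ord_max = f by rewrite /g' unlift_none.
have hfg j : ip f (g j) = 0 by apply: (hfu (inr j)).
have hgf j : ip (g j) f = 0 by rewrite (ipJ hip) hfg conjc0.
exists g'; split.
- by move=> i; case: (unliftP ord_max i) => [j ->|->]; rewrite ?Eg ?Ef.
- move=> i l; case: (unliftP ord_max i) => [j ->|->]; case: (unliftP ord_max l) => [j' ->|->];
    rewrite ?Eg ?Ef ?hgo ?hff ?hfg ?hgf ?(inj_eq lift_inj) //.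
  + by rewrite eq_sym (negbTE (neq_lift _ _)).
  + by rewrite (negbTE (neq_lift _ _)).
  + by rewrite eqxx.
- move=> i r; case: (unliftP ord_max i) => [j ->|->]; rewrite ?Eg ?Ef ?hgu //.
  exact: (hfu (inl r)).
Qed.
End Family.

Section Lin.
Variable R : realType.
Variable H : lmodType R[i].
Variable ip : H -> H -> R[i].

Lemma lin0 (T : H -> H) : linear_op T -> T 0 = 0.
Proof.
move=> hT; have := hT (-1) 0 0.
by rewrite addr0 !scaleN1r oppr0 addNr.
Qed.

Lemma lin_sum (T : H -> H) n (c : 'I_n -> R[i]) (x : 'I_n -> H) : linear_op T ->
  T (\sum_(i < n) c i *: x i) = \sum_(i < n) c i *: T (x i).
Proof.
move=> hT; elim: n c x => [|n IH] c x; first by rewrite !big_ord0 lin0.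
by rewrite !big_ord_recr /= addrC hT IH addrC.
Qed.

Lemma sum_delta n (F : 'I_n -> R[i]) l : \sum_(i < n) F i * (i == l)%:R = F l.
Proof.
rewrite (bigD1 l) //= eqxx mulr1 big1 ?addr0 // => i /negbTE ->; by rewrite mulr0.
Qed.

Lemma sum_delta' n (F : 'I_n -> R[i]) l : \sum_(i < n) F i * (l == i)%:R = F l.
Proof. by rewrite -(sum_delta F l); apply: eq_bigr => i _; rewrite eq_sym. Qed.
End Lin.

Section NR.
Variable R : realType.
Variable H : lmodType R[i].
Variable ip : H -> H -> R[i].
Hypothesis hip : is_inner_product ip.
Variable m : nat.
Variable A : 'I_m -> H -> H.
Hypothesis hlin : forall j, linear_op (A j).
Hypothesis hsa : forall j, self_adjoint ip (A j).

Lemma nr_family p (a : 'rV[R]_m) : joint_rank_nr ip A p a ->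
  forall (U : finType) (u : U -> H) (n : nat), (#|U| + n <= p)%N ->
  exists g : 'I_n -> H, [/\ forall i l, ip (g i) (g l) = (i == l)%:R,
     forall i r, ip (g i) (u r) = 0 &
     forall j i l, ip (A j (g i)) (g l) = ((a ord0 j)%:C)%C * (i == l)%:R].
Proof.
move=> [P [[hPl hPP hPs] [v [hvr hvi hvs]] hPA]] U u n hn.
have [g [hgc hgo hgu]] := family_vec hip hvi u hn.
have hPv i : P (v i) = v i by have [y <-] := hvr i; rewrite hPP.
have hPg i : P (g i) = g i.
  have [c ->] := hgc i; rewrite lin_sum //; apply: eq_bigr => l _; by rewrite hPv.
exists g; split => // j i l.
rewrite -{1}(hPg i) -(hPg l) -hPs hPA (ipZl hip).
by rewrite hPg hgo.
Qed.

Lemma family_nr k (c : 'rV[R]_m) (g : 'I_k -> H) :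
  (forall i l, ip (g i) (g l) = (i == l)%:R) ->
  (forall j i l, ip (A j (g i)) (g l) = ((c ord0 j)%:C)%C * (i == l)%:R) ->
  joint_rank_nr ip A k c.
Proof.
move=> hgo hgA.
pose T x := \sum_(i < k) ip x (g i) *: g i.
have hTg i : T (g i) = g i.
  rewrite /T (bigD1 i) //= hgo eqxx scale1r big1 ?addr0 // => l /negbTE hl.
  by rewrite hgo eq_sym hl scale0r.
have hTl : linear_op T.
  move=> a x y; rewrite /T scaler_sumr -big_split /=; apply: eq_bigr => i _.
  by rewrite (ipZDl hip) scalerDl scalerA.
have hipT x l : ip (T x) (g l) = ip x (g l).
  rewrite (ip_suml hip) -(sum_delta (fun i => ip x (g i)) l).
  by apply: eq_bigr => i _; rewrite (ipZl hip) hgo.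
exists T; split.
- split => //.
  + by move=> x; rewrite {1}/T; apply: eq_bigr => l _; rewrite hipT.
  + move=> x y; rewrite /T (ip_suml hip) (ip_sumr hip); apply: eq_bigr => i _.
    by rewrite (ipZl hip) (ipZr hip) -(ipJ hip) mulrC.
- exists g; split.
  + by move=> i; exists (g i).
  + move=> a ha i; have := congr1 (fun x => ip x (g i)) ha.
    rewrite /= (ip_suml hip) (ip0l hip) => <-.
    rewrite -(sum_delta a i); apply: eq_bigr => l _; by rewrite (ipZl hip) hgo.
  + by move=> x; exists (fun i => ip x (g i)).
- move=> j x; rewrite {1}/T /T scaler_sumr; apply: eq_bigr => l _.
  rewrite scalerA; congr (_ *: _).
  rewrite lin_sum // (ip_suml hip).
  under eq_bigr => i _ do rewrite (ipZl hip) hgA mulrA.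
  by rewrite (sum_delta (fun i => ip x (g i) * _) l) mulrC.
Qed.
End NR.

Section Key.
Variable R : realType.
Variable H : lmodType R[i].
Variable ip : H -> H -> R[i].
Hypothesis hip : is_inner_product ip.
Variable m : nat.
Variable A : 'I_m -> H -> H.
Hypothesis hlin : forall j, linear_op (A j).
Hypothesis hsa : forall j, self_adjoint ip (A j).

Lemma linZ (T : H -> H) a x : linear_op T -> T (a *: x) = a *: T x.
Proof. by move=> hT; have := hT a x 0; rewrite (lin0 hT) !addr0. Qed.

Lemma key k khat (hk : ((m + 2) * k <= khat)%N) (a b : 'rV[R]_m) (t : R) :
  0 <= t <= 1 -> joint_rank_nr ip A khat a -> joint_rank_nr ip A k b ->
  joint_rank_nr ip A k ((1 - t) *: a + t *: b).
Proof.
move=> /andP [t0 t1] ha hb.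
have h0 : (#|{: void}| + k <= k)%N by rewrite card_void.
have [e [heo _ heA]] := nr_family hip hb (fun x : void => match x with end) h0.
pose u (s : 'I_k * option 'I_m) := match s.2 with None => e s.1 | Some j => A j (e s.1) end.
have hU : (#|{: 'I_k * option 'I_m}| + k <= khat)%N.
  by rewrite card_prod card_option !card_ord; apply: leq_trans hk; lia.
have [f [hfo hfu hfA]] := nr_family hip ha u hU.
have hfe i l : ip (f i) (e l) = 0 by apply: (hfu i (l, None)).
have hef i l : ip (e i) (f l) = 0 by rewrite (ipJ hip) hfe conjc0.
have hfAe j i l : ip (A j (f i)) (e l) = 0 by rewrite hsa; apply: (hfu i (l, Some j)).
have hAef j i l : ip (A j (e i)) (f l) = 0.
  by rewrite (ipJ hip) (hfu l (i, Some j)) conjc0.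
pose sa : R[i] := ((Num.sqrt (1 - t))%:C)%C.
pose sb : R[i] := ((Num.sqrt t)%:C)%C.
have hsa2 : sa * sa = ((1 - t)%:C)%C by rewrite /sa -rmorphM -expr2 sqr_sqrtr // subr_ge0.
have hsb2 : sb * sb = (t%:C)%C by rewrite /sb -rmorphM -expr2 sqr_sqrtr.
pose g i := sa *: f i + sb *: e i.
apply: (family_nr hip hlin (g := g)).
- move=> i l; rewrite /g !(ipDl hip) !(ipDr hip) !(ipZl hip) !(ipZr hip) !conjc_real.
  rewrite hfo heo hfe hef !mulr0 addr0 add0r !mulrA hsa2 hsb2 -mulrDl -rmorphD /=.
  by rewrite subrK mul1r.
- move=> j i l; rewrite /g hlin linZ // !(ipDl hip) !(ipDr hip) !(ipZl hip) !(ipZr hip) !conjc_real.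
  rewrite hfA heA hfAe hAef !mulr0 addr0 add0r !mulrA hsa2 hsb2 !mxE.
  rewrite [X in _ = X * _]rmorphD [X in _ = (X + _) * _]rmorphM [X in _ = (_ + X) * _]rmorphM.
  ring.
Qed.
End Key.

Section Conv.
Variable R : realType.
Variable H : lmodType R[i].
Variable ip : H -> H -> R[i].
Hypothesis hip : is_inner_product ip.
Variable m : nat.
Variable A : 'I_m -> H -> H.
Hypothesis hlin : forall j, linear_op (A j).
Hypothesis hsa : forall j, self_adjoint ip (A j).
Variables k khat : nat.
Hypothesis hk : ((m + 2) * k <= khat)%N.

Lemma sub_nr a : joint_rank_nr ip A khat a -> joint_rank_nr ip A k a.
Proof.
move=> ha.
have h0 : (#|{: void}| + k <= khat)%N.
  by rewrite card_void add0n; apply: leq_trans hk; rewrite leq_pmull // addn2.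
have [e [heo _ heA]] := nr_family hip ha (fun x : void => match x with end) h0.
exact: (family_nr hip hlin heo heA).
Qed.

Lemma conv_ind n (w : 'I_n -> R) (x : 'I_n -> 'rV[R]_m) (s : R) (b : 'rV[R]_m) :
  0 <= s -> (forall i, 0 <= w i) -> s + \sum_(i < n) w i = 1 ->
  (forall i, joint_rank_nr ip A khat (x i)) -> joint_rank_nr ip A k b ->
  joint_rank_nr ip A k (s *: b + \sum_(i < n) w i *: x i).
Proof.
elim: n w x s => [|n IH] w x s hs hw hsum hx hb.
  by move: hsum; rewrite !big_ord0 !addr0 => ->; rewrite scale1r.
pose w' i := w (widen_ord (leqnSn n) i).
pose x' i := x (widen_ord (leqnSn n) i).
pose S := s + \sum_(i < n) w' i.
have hS1 : S + w ord_max = 1 by rewrite -hsum big_ord_recr /= addrA.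
have hS0 : 0 <= S by apply: addr_ge0 hs _; apply: sumr_ge0 => i _; exact: hw.
rewrite big_ord_recr /=.
have -> : \sum_(i < n) w (widen_ord (leqnSn n) i) *: x (widen_ord (leqnSn n) i)
   = \sum_(i < n) w' i *: x' i by [].
case: (eqVneq S 0) => hS.
  have /andP [/eqP s0 /eqP sw0] : (s == 0) && (\sum_(i < n) w' i == 0).
    rewrite -paddr_eq0 //; first by apply/eqP; exact: hS.
    by apply: sumr_ge0 => i _; exact: hw.
  have hw0 := psumr_eq0P (fun i _ => hw _) sw0.
  have -> : w ord_max = 1 by rewrite -hS1 hS add0r.
  rewrite s0 scale0r add0r big1 ?add0r ?scale1r; first exact: sub_nr.
  by move=> i _; rewrite /w' hw0 // scale0r.
have Spos : 0 < S by rewrite lt_def hS hS0.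
have hsum' : s / S + \sum_(i < n) w' i / S = 1.
  by rewrite -mulr_suml -mulrDl divff.
have hy := IH (fun i => w' i / S) x' (s / S) (divr_ge0 hs hS0)
  (fun i => divr_ge0 (hw _) hS0) hsum' (fun i => hx _) hb.
have ht : 0 <= S <= 1 by rewrite hS0 -hS1 lerDl hw.
have hp := key hip hlin hsa hk ht (hx ord_max) hy.
have hS1' : 1 - S = w ord_max by rewrite -hS1 addrC addKr.
have E : s *: b + (\sum_(i < n) w' i *: x' i + w ord_max *: x ord_max) =
   (1 - S) *: x ord_max + S *: (s / S *: b + \sum_(i < n) (w' i / S) *: x' i).
  rewrite hS1' scalerDr scalerA scaler_sumr mulrC (divfK hS).
  under [in RHS]eq_bigr => i _ do rewrite scalerA mulrC (divfK hS).
  by rewrite addrA [RHS]addrC.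
by rewrite E.
Qed.
End Conv.

Unset Implicit Arguments.
Set Strict Implicit.

Theorem theorem3p1 (R : realType) (H : lmodType R[i]) (ip : H -> H -> R[i])
  (hH : is_hilbert ip) (m : nat) (A : 'I_m -> H -> H)
  (hA : forall j, bounded_op ip (A j) /\ self_adjoint ip (A j))
  (k : nat) (hk : (0 < k)%N) (khat : nat) (hkhat : ((m + 2) * k <= khat)%N)
  (hne : exists a, joint_rank_nr ip A khat a) :
  [/\ star_shaped (joint_rank_nr ip A k),
      (forall a, conv_hull (joint_rank_nr ip A khat) a -> joint_rank_nr ip A k a) &
      (forall c, conv_hull (joint_rank_nr ip A khat) c -> star_center (joint_rank_nr ip A k) c)].
Proof.
have hip : is_inner_product ip by case: hH.
have hlin j : linear_op (A j) by case: (hA j) => -[].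
have hsa j : self_adjoint ip (A j) by case: (hA j).
have [a0 ha0] := hne.
have hb0 := sub_nr hip hlin hkhat ha0.
have hconv c : conv_hull (joint_rank_nr ip A khat) c -> joint_rank_nr ip A k c.
  move=> [n [w [x [hw hw1 hx ->]]]].
  have := conv_ind hip hlin hsa hkhat (s := 0) (lexx 0) hw _ hx hb0.
  by rewrite add0r scale0r add0r; apply.
have hstar c : conv_hull (joint_rank_nr ip A khat) c -> star_center (joint_rank_nr ip A k) c.
  move=> hc; split; first exact: hconv.
  move: hc => [n [w [x [hw hw1 hx ->]]]] b hb t /andP [t0 t1].
  have hw' i : 0 <= (1 - t) * w i by rewrite mulr_ge0 // subr_ge0.
  have hs : t + \sum_(i < n) (1 - t) * w i = 1 by rewrite -mulr_sumr hw1 mulr1 addrC subrK.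
  have := conv_ind hip hlin hsa hkhat t0 hw' hs hx hb.
  rewrite scaler_sumr addrC.
  by under [in X in _ X -> _]eq_bigr => i _ do rewrite -scalerA.
split => //.
exists a0; apply: hstar.
exists 1%N, (fun _ => 1), (fun _ => a0); split => //.
- by rewrite big_ord1.
- by rewrite big_ord1 scale1r.
Qed.
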